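(* Let $d\ge2$, $\varepsilon>0$, $s=\lceil d/(1+e^{\varepsilon})\rceil$, and consider the MMRC mechanism simulating $\texttt{Subset Selection}$ with $N$ candidates and estimator $\hat{\mathbf{x}}^{\mathrm{mmrc}}=(\mathbf{z}_K-b_{\mathrm{mmrc}}\mathbf{1})/m_{\mathrm{mmrc}}$. Then for every $\mathbf{x}\in\{e_1,\dots,e_d\}$, $\mathbb{E}[\hat{\mathbf{x}}^{\mathrm{mmrc}}]=\mathbf{x}$, the expectation being over the candidates and $K$.
   Context: $\texttt{Subset Selection}$: inputs $\mathcal{X}=\{e_1,\dots,e_d\}$ (standard basis of $\mathbb{R}^d$); outputs $\mathcal{Z}=\{\mathbf{z}\in\{0,1\}^d:\sum_iz_i=s\}$; for $\mathbf{x}=e_j$ let $\mathsf{Cap}_{\mathbf{x}}=\{\mathbf{z}\in\mathcal{Z}:z_j=1\}$; $q^{\mathrm{ss}}(\mathbf{z}\mid\mathbf{x})=c_1=\frac{e^\varepsilon}{\binom{d-1}{s-1}e^\varepsilon+\binom{d-1}{s}}$ if $\mathbf{z}\in\mathsf{Cap}_{\mathbf{x}}$ and $c_2=\frac{1}{\binom{d-1}{s-1}e^\varepsilon+\binom{d-1}{s}}$ otherwise. Let $\bar\theta=s/d$ (the probability a uniform element of $\mathcal{Z}$ lies in $\mathsf{Cap}_{\mathbf{x}}$). MMRC: draw $\mathbf{z}_1,\dots,\mathbf{z}_N$ i.i.d. uniform on $\mathcal{Z}$; $\theta=\frac1N\#\{k:\mathbf{z}_k\in\mathsf{Cap}_{\mathbf{x}}\}$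 (so $N\theta\sim\mathrm{Binom}(N,s/d)$); $\pi^{\mathrm{mrc}}(k)=\frac1N\frac{c_i}{\theta c_1+(1-\theta)c_2}$ ($i=1$ for cap candidates, $i=2$ otherwise); $t_u=\frac1N\frac{c_1}{\bar\theta c_1+(1-\bar\theta)c_2}$, $t_l=\frac1N\frac{c_2}{\bar\theta c_1+(1-\bar\theta)c_2}$; $\pi^{\mathrm{mmrc}}=\pi^{\mathrm{mrc}}$ if $\theta=\bar\theta$; if $\theta<\bar\theta$, $\pi^{\mathrm{mmrc}}(k)=t_u$ on cap candidates and $\frac{1-N\theta t_u}{N(1-\theta)}$ otherwise; if $\theta>\bar\theta$, $\pi^{\mathrm{mmrc}}(k)=t_l$ on non-cap candidates and $\frac{1-N(1-\theta)t_l}{N\theta}$ otherwise; $K\sim\pi^{\mathrm{mmrc}}$. Let $G=\mathbb{E}_\theta\Big[\frac{e^\varepsilon\theta}{e^\varepsilon\bar\theta+1-\bar\theta}\mathbf{1}(\theta\le\bar\theta)+\frac{e^\varepsilon\bar\theta+\theta-\bar\theta}{e^\varepsilon\bar\theta+1-\bar\theta}\mathbf{1}(\theta>\bar\theta)\Big]$, $m_{\mathrm{mmrc}}=\frac{d}{d-1}G-\frac{s}{d-1}$, $b_{\mathrm{mmrc}}=\frac{1}{d-1}(s-G)$; $\mathbf{1}$ denotes the all-ones vector. *)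

(* Defs.v *)
From HB Require Import structures.
From mathcomp Require Import all_boot all_order all_algebra.
From mathcomp Require Import all_classical all_reals all_analysis.
Set Implicit Arguments. Unset Strict Implicit. Unset Printing Implicit Defensive.
Import Order.TTheory GRing.Theory Num.Theory.
Local Open Scope ring_scope.

Section MMRC.
Variables (R : realType) (d s N : nat) (eps : R).

(* Output space Z = {z in {0,1}^d : sum z = s}, represented by supports. *)
Definition Zset : {set {set 'I_d}} := [set A : {set 'I_d} | #|A| == s].

Definition zvec (A : {set 'I_d}) : 'rV[R]_d := \row_i (i \in A)%:R.

Definition ones : 'rV[R]_d := const_mx 1.

Definition evec (j : 'I_d) : 'rV[R]_d := delta_mx 0 j.

Definition ss_den : R :=
  'C(d - 1, s - 1)%:R * expR eps + 'C(d - 1, s)%:R.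
Definition c1 : R := expR eps / ss_den.
Definition c2 : R := 1 / ss_den.

Definition thetabar : R := s%:R / d%:R.

Definition cands := {ffun 'I_N -> {set 'I_d}}.

(* cap of x = e_j : sets containing j *)
Definition theta (j : 'I_d) (zs : cands) : R :=
  #|[set k : 'I_N | j \in zs k]|%:R / N%:R.

Definition pi_mrc (j : 'I_d) (zs : cands) (k : 'I_N) : R :=
  let th := theta j zs in
  N%:R^-1 * ((if j \in zs k then c1 else c2) / (th * c1 + (1 - th) * c2)).

Definition t_u : R := N%:R^-1 * (c1 / (thetabar * c1 + (1 - thetabar) * c2)).
Definition t_l : R := N%:R^-1 * (c2 / (thetabar * c1 + (1 - thetabar) * c2)).

Definition pi_mmrc (j : 'I_d) (zs : cands) (k : 'I_N) : R :=
  let th := theta j zs in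
  if th == thetabar then pi_mrc j zs k
  else if th < thetabar then
    (if j \in zs k then t_u else (1 - N%:R * th * t_u) / (N%:R * (1 - th)))
  else
    (if j \in zs k then (1 - N%:R * (1 - th) * t_l) / (N%:R * th) else t_l).

Definition Gint (th : R) : R :=
  let D := expR eps * thetabar + 1 - thetabar in
  (if th <= thetabar then expR eps * th / D else 0)
  + (if thetabar < th then (expR eps * thetabar + th - thetabar) / D else 0).

(* G = E_theta[Gint theta], with N theta ~ Binom(N, s/d) *)
Definition G : R :=
  \sum_(n < N.+1)
    'C(N, n)%:R * thetabar ^+ n * (1 - thetabar) ^+ (N - n) * Gint (n%:R / N%:R).

Definition m_mmrc : R := d%:R / (d%:R - 1) * G - s%:R / (d%:R - 1).
Definition b_mmrc : R := (d%:R - 1)^-1 * (s%:R - G).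

Definition xhat (zs : cands) (k : 'I_N) : 'rV[R]_d :=
  m_mmrc^-1 *: (zvec (zs k) - b_mmrc *: ones).

(* E[xhat]: candidates i.i.d. uniform on Z, then K ~ pi_mmrc *)
Definition E_xhat (j : 'I_d) : 'rV[R]_d :=
  \sum_(zs : cands | [forall k, zs k \in Zset])
    ((#|Zset|%:R : R) ^- N) *: \sum_(k < N) pi_mmrc j zs k *: xhat zs k.

End MMRC.

(* Main.v *)
Require Import Defs.
From HB Require Import structures.
From mathcomp Require Import all_boot all_order all_algebra.
From mathcomp Require Import all_classical all_reals all_analysis.
From mathcomp Require Import fingroup perm.
From mathcomp Require Import ring lra zify.
Import Order.TTheory GRing.Theory Num.Theory.
Local Open Scope ring_scope.

Section Proof.
Variables (R : realType) (d s N : nat) (eps : R).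
Hypothesis hs0 : (0 < s)%N.
Hypothesis hsd : (s < d)%N.
Hypothesis hN : (0 < N)%N.
Hypothesis heps : 0 < eps.

Let e := expR eps.
Let D0 := @ss_den R d s eps.
Let tb := thetabar R d s.
Let n := (N%:R : R).

Lemma e_gt0 : 0 < e. Proof. exact: expR_gt0. Qed.
Lemma D0_gt0 : 0 < D0.
Proof.
rewrite /D0 /ss_den; apply: ltr_pwDl; last by rewrite ler0n.
apply: mulr_gt0; last exact: e_gt0.
by rewrite ltr0n bin_gt0; apply: leq_sub2r; apply: ltnW.
Qed.
Lemma n_gt0 : 0 < n. Proof. by rewrite /n ltr0n. Qed.
Lemma tb_gt0 : 0 < tb.
Proof. by rewrite /tb /thetabar divr_gt0 // ltr0n //; apply: leq_ltn_trans hsd. Qed.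
Lemma tb_lt1 : tb < 1.
Proof.
rewrite /tb /thetabar ltr_pdivrMr ?mul1r ?ltr_nat //.
by rewrite ltr0n; apply: leq_ltn_trans hsd.
Qed.
Lemma Dtb_gt0 : 0 < e * tb + 1 - tb.
Proof. have := e_gt0; have := tb_gt0; have := tb_lt1; nra. Qed.

Let c1 := @c1 R d s eps.
Let c2 := @c2 R d s eps.
Let tu := @t_u R d s N eps.
Let tl := @t_l R d s N eps.

Definition capv (x : R) : R :=
  if x == tb then n^-1 * (c1 / (x * c1 + (1 - x) * c2))
  else if x < tb then tu else (1 - n * (1 - x) * tl) / (n * x).
Definition ncapv (x : R) : R :=
  if x == tb then n^-1 * (c2 / (x * c1 + (1 - x) * c2))
  else if x < tb then (1 - n * x * tu) / (n * (1 - x)) else tl.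

Lemma pi_split j (zs : cands d N) k :
  pi_mmrc s eps j zs k =
  if j \in zs k then capv (theta R j zs) else ncapv (theta R j zs).
Proof.
rewrite /pi_mmrc /pi_mrc /capv /ncapv /=.
by case: (j \in zs k).
Qed.

Ltac nzt := repeat (apply/andP; split); apply/eqP => ?; nra.

Lemma sum_split x : 0 <= x <= 1 -> n * x * capv x + n * (1 - x) * ncapv x = 1.
Proof.
move=> /andP[x0 x1].
have D0n : 0 < ss_den d s eps := D0_gt0.
have nn : 0 < (N%:R : R) := n_gt0. have ee : 0 < expR eps := e_gt0.
have t0 : 0 < thetabar R d s := tb_gt0. have t1 : thetabar R d s < 1 := tb_lt1.
rewrite /capv /ncapv /tu /tl /t_u /t_l /c1 /c2 /Defs.c1 /Defs.c2 /D0 /tb /n.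
case: eqP => [->|ne].
  by field; nzt.
case: ifP => lt.
  by field; nzt.
have lt' : thetabar R d s < x.
  by rewrite lt_neqAle eq_sym; apply/andP; split; [apply/eqP | rewrite leNgt lt].
by field; nzt.
Qed.

Lemma cap_Gint x : 0 <= x <= 1 -> n * x * capv x = Gint d s eps x.
Proof.
move=> /andP[x0 x1].
have D0n : 0 < ss_den d s eps := D0_gt0.
have nn : 0 < (N%:R : R) := n_gt0. have ee : 0 < expR eps := e_gt0.
have t0 : 0 < thetabar R d s := tb_gt0. have t1 : thetabar R d s < 1 := tb_lt1.
rewrite /Gint /capv /tu /tl /t_u /t_l /c1 /c2 /Defs.c1 /Defs.c2 /D0 /tb /n.
case: eqP => [->|ne].
  rewrite lexx ltxx addr0.
  by field; nzt.
case: ifP => lt.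
  rewrite (ltW lt) ltNge (ltW lt) /= addr0.
  by field; nzt.
have lt' : thetabar R d s < x.
  by rewrite lt_neqAle eq_sym; apply/andP; split; [apply/eqP | rewrite leNgt lt].
rewrite lt' leNgt lt' /= add0r.
by field; nzt.
Qed.

Lemma sum_if (S : {set 'I_N}) (a b : R) :
  \sum_k (if k \in S then a else b) = #|S|%:R * a + (N - #|S|)%:R * b.
Proof.
rewrite (bigID (mem S)) /=.
rewrite (eq_bigr (fun _ => a)) => [|k ->//].
rewrite [X in _ + X](eq_bigr (fun _ => b)) => [|k /negbTE ->//].
rewrite sumr_const.
rewrite (eq_bigl (mem (~: S))) => [|k]; last by rewrite !inE.
rewrite sumr_const -mulr_natl -mulr_natl.
have -> : #|~: S| = (N - #|S|)%N by have h := cardsC S; rewrite card_ord in h; lia.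
by rewrite !mulr1 !mulr_natl.
Qed.

Section Fixj.
Variable j : 'I_d.

Lemma theta_bounds (zs : cands d N) : 0 <= theta R j zs <= 1.
Proof.
rewrite /theta divr_ge0 ?ler0n //= ler_pdivrMr ?ltr0n // mul1r ler_nat.
by rewrite -[X in (_ <= X)%N](card_ord N) max_card.
Qed.

Lemma cnt_eq (zs : cands d N) :
  #|[set k | j \in zs k]|%:R = n * theta R j zs.
Proof. by rewrite /theta mulrC divfK // /n pnatr_eq0 -lt0n. Qed.

Lemma ncnt_eq (zs : cands d N) :
  (N - #|[set k | j \in zs k]|)%:R = n * (1 - theta R j zs).
Proof.
rewrite natrB; last by rewrite -[X in (_ <= X)%N](card_ord N) max_card.
by rewrite cnt_eq mulrBr mulr1.
Qed.

Lemma sum_pi (zs : cands d N) : \sum_k pi_mmrc s eps j zs k = 1.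
Proof.
set S := [set k | j \in zs k].
have hS : forall k, (k \in S) = (j \in zs k) by move=> k; rewrite inE.
rewrite (eq_bigr (fun k => if k \in S then capv (theta R j zs) else ncapv (theta R j zs))) => [|k _]; last by rewrite pi_split hS.
by rewrite sum_if cnt_eq ncnt_eq sum_split // theta_bounds.
Qed.

Lemma sum_pi_cap (zs : cands d N) :
  \sum_k pi_mmrc s eps j zs k * (j \in zs k)%:R = Gint d s eps (theta R j zs).
Proof.
set S := [set k | j \in zs k].
have hS : forall k, (k \in S) = (j \in zs k) by move=> k; rewrite inE.
rewrite (eq_bigr (fun k => if k \in S then capv (theta R j zs) else 0)) => [|k _]; last first.
  by rewrite pi_split hS; case: (j \in zs k); rewrite ?mulr1 ?mulr0.
by rewrite sum_if mulr0 addr0 cnt_eq cap_Gint // theta_bounds.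
Qed.

Definition aR : R := \sum_(A in Zset d s) (j \in A)%:R.
Definition bR : R := \sum_(A in Zset d s) (j \notin A)%:R.

Lemma prod_ind (I : finType) (b : I -> bool) :
  \prod_k ((b k)%:R : R) = ([forall k, b k])%:R.
Proof.
case: (boolP [forall k, b k]) => [/forallP H | ].
  by rewrite big1 // => k _; rewrite H.
rewrite negb_forall => /existsP [k nk].
by rewrite (bigD1 k) //= (negbTE nk) mul0r.
Qed.

Lemma prod_sum_S (S : {set 'I_N}) :
  \prod_k \sum_(A in Zset d s) (((j \in A) == (k \in S))%:R : R)
  = aR ^+ #|S| * bR ^+ (N - #|S|).
Proof.
rewrite (bigID (mem S)) /=.
rewrite (eq_bigr (fun _ => aR)) => [|k kS]; last first.
  by apply: eq_bigr => A _; rewrite kS eqb_id.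
rewrite [X in _ * X](eq_bigr (fun _ => bR)) => [|k kS]; last first.
  by apply: eq_bigr => A _; rewrite (negbTE kS) eqbF_neg.
rewrite prodr_const.
rewrite (eq_bigl (mem (~: S))) => [|k]; last by rewrite !inE.
rewrite prodr_const.
by have -> : #|~: S| = (N - #|S|)%N by have h := cardsC S; rewrite card_ord in h; lia.
Qed.

Lemma count_S (S : {set 'I_N}) :
  \sum_(zs : cands d N | [forall k, zs k \in Zset d s])
     (([set k | j \in zs k] == S)%:R : R) = aR ^+ #|S| * bR ^+ (N - #|S|).
Proof.
rewrite -prod_sum_S bigA_distr_big.
apply: eq_big => [zs | zs _].
  apply/idP/idP => H.
    by apply/ffun_onP => k; exact: (forallP H k).
  by apply/forallP => k; exact: (ffun_onP H k).
rewrite prod_ind; congr (_%:R); congr (nat_of_bool _).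
apply/idP/idP => [/eqP <- | /forallP H].
  by apply/forallP => k; rewrite inE.
by apply/eqP/setP => k; rewrite inE; apply/eqP; exact: H.
Qed.

Lemma sum_card_S (g : nat -> R) :
  \sum_(S : {set 'I_N}) g #|S| = \sum_(m < N.+1) 'C(N, m)%:R * g m.
Proof.
have cle : forall S : {set 'I_N}, (#|S| < N.+1)%N.
  by move=> S; rewrite ltnS -[X in (_ <= X)%N](card_ord N) max_card.
rewrite (partition_big (fun S : {set 'I_N} => (inord #|S| : 'I_N.+1)) predT) //=.
apply: eq_bigr => m _.
rewrite (eq_bigr (fun _ => g m)) => [|S /eqP <-]; last by rewrite inordK.
rewrite (eq_bigl (mem [set S : {set 'I_N} | #|S| == m])) => [|S]; last first.
  rewrite !inE; apply/eqP/eqP => [<- | H]; first by rewrite inordK.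
  by apply: val_inj; rewrite /= inordK // H.
by rewrite sumr_const card_draws card_ord mulr_natl.
Qed.

Lemma count_lemma (F : nat -> R) :
  \sum_(zs : cands d N | [forall k, zs k \in Zset d s]) F #|[set k | j \in zs k]| =
  \sum_(m < N.+1) 'C(N, m)%:R * (aR ^+ m * bR ^+ (N - m)) * F m.
Proof.
have step1 : forall zs : cands d N, F #|[set k | j \in zs k]| =
    \sum_(S : {set 'I_N}) (([set k | j \in zs k] == S)%:R * F #|S|).
  move=> zs; rewrite (bigD1 [set k | j \in zs k]) //= eqxx mul1r big1 ?addr0 //.
  by move=> S; rewrite eq_sym => /negbTE ->; rewrite mul0r.
rewrite (eq_bigr _ (fun zs _ => step1 zs)) exchange_big /=.
rewrite (eq_bigr (fun S : {set 'I_N} => aR ^+ #|S| * bR ^+ (N - #|S|) * F #|S|)) => [|S _]; last first.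
  by rewrite -mulr_suml count_S.
rewrite (sum_card_S (fun m => aR ^+ m * bR ^+ (N - m) * F m)).
by apply: eq_bigr => m _; rewrite mulrA.
Qed.

Lemma sum_ind_Z (c : {set 'I_d} -> bool) :
  \sum_(A in Zset d s) ((c A)%:R : R) = #|[set A in Zset d s | c A]|%:R.
Proof.
rewrite -natr_sum; congr (_%:R).
rewrite (eq_bigr (fun A => if c A then 1%N else 0%N)) => [|A _]; last by case: (c A).
by rewrite -big_mkcondr sum1dep_card.
Qed.

Let W : R := 'C(d, s)%:R.

Lemma W_gt0 : 0 < W.
Proof. by rewrite /W ltr0n bin_gt0 ltnW. Qed.

Lemma bR_eq : bR = 'C(d.-1, s)%:R.
Proof.
rewrite /bR sum_ind_Z.
have -> : [set A in Zset d s | j \notin A] = [set A : {set 'I_d} | A \subset [set~ j] & #|A| == s].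
  apply/setP => A; rewrite !inE finset.subsetC finset.sub1set !inE andbC.
  by [].
by rewrite cards_draws cardsC1 card_ord.
Qed.

Lemma aRbR : aR + bR = W.
Proof.
rewrite /aR /bR -big_split /=.
rewrite (eq_bigr (fun A : {set 'I_d} => (1 : R))) => [|A _]; last by case: (j \in A); rewrite ?addr0 ?add0r.
by rewrite sumr_const /Zset card_draws card_ord /W.
Qed.

Lemma aR_eq : aR = tb * W.
Proof.
have hW : W = 'C(d.-1, s)%:R + 'C(d.-1, s.-1)%:R.
  rewrite /W -natrD.
  have -> : d = d.-1.+1 by rewrite prednK //; apply: leq_ltn_trans hsd.
  have -> : s = s.-1.+1 by rewrite prednK.
  by rewrite binS /=.
have : aR = 'C(d.-1, s.-1)%:R.
  by apply: (addIr bR); rewrite aRbR hW bR_eq addrC.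
move=> ->.
have hd : (0 < d)%N by apply: leq_ltn_trans hsd.
have key := mul_bin_diag d s.-1.
rewrite prednK // in key.
rewrite /tb /thetabar /W.
apply: (mulfI (x := (d%:R : R))); first by rewrite pnatr_eq0 -lt0n.
rewrite -natrM key natrM.
field. by rewrite pnatr_eq0 -lt0n.
Qed.

Lemma bR_eq2 : bR = (1 - tb) * W.
Proof. by apply: (addrI aR); rewrite aRbR aR_eq mulrBl mul1r addrC subrK. Qed.

Definition Q (i : 'I_d) : R :=
  (#|Zset d s|%:R : R) ^- N *
  \sum_(zs : cands d N | [forall k, zs k \in Zset d s])
     \sum_k pi_mmrc s eps j zs k * (i \in zs k)%:R.

Lemma cardZ : (#|Zset d s|%:R : R) = W.
Proof. by rewrite /Zset card_draws card_ord. Qed.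

Lemma Qj : Q j = G d s N eps.
Proof.
rewrite /Q (eq_bigr (fun zs : cands d N => Gint d s eps (#|[set k | j \in zs k]|%:R / N%:R))) => [|zs _]; last first.
  by rewrite sum_pi_cap.
rewrite (count_lemma (fun m => Gint d s eps (m%:R / N%:R))) mulr_sumr /G.
apply: eq_bigr => m _.
rewrite cardZ aR_eq bR_eq2 !exprMn.
have hm : (m <= N)%N by rewrite -ltnS ltn_ord.
have hWN : W ^+ N = W ^+ m * W ^+ (N - m) by rewrite -exprD subnKC.
have W0 : W != 0 by apply: lt0r_neq0; exact: W_gt0.
rewrite hWN; field.
by rewrite !expf_neq0.
Qed.

Lemma sum_const_ok (c : R) :
  \sum_(zs : cands d N | [forall k, zs k \in Zset d s]) c = c * W ^+ N.
Proof.
rewrite (eq_bigl (mem (ffun_on (mem (Zset d s))))) => [|zs]; last first.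
  apply/idP/idP => H.
    by apply/ffun_onP => k; exact: (forallP H k).
  by apply/forallP => k; exact: (ffun_onP H k).
by rewrite sumr_const card_ffun_on card_ord -cardZ -natrX mulr_natr.
Qed.

Lemma sum_mem (A : {set 'I_d}) : \sum_(i : 'I_d) ((i \in A)%:R : R) = #|A|%:R.
Proof.
rewrite -natr_sum; congr (_%:R).
rewrite (eq_bigr (fun i => if i \in A then 1%N else 0%N)) => [|i _]; last by case: (i \in A).
by rewrite -big_mkcond sum1_card.
Qed.

Lemma Qsum : \sum_i Q i = s%:R.
Proof.
rewrite /Q -mulr_sumr exchange_big /=.
rewrite (eq_bigr (fun _ => s%:R)) => [|zs /forallP ok]; last first.
  rewrite exchange_big /=.
  rewrite (eq_bigr (fun k => pi_mmrc s eps j zs k * s%:R)) => [|k _]; last first.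
    rewrite -mulr_sumr sum_mem.
    by have := ok k; rewrite /Zset inE => /eqP ->.
  by rewrite -mulr_suml sum_pi mul1r.
rewrite sum_const_ok cardZ mulrCA mulVf ?mulr1 //.
by rewrite expf_neq0 // lt0r_neq0 // W_gt0.
Qed.

Lemma Qsym (i i' : 'I_d) : i != j -> i' != j -> Q i' = Q i.
Proof.
move=> hi hi'.
pose sg : {perm 'I_d} := tperm i i'.
pose Phi (zs : cands d N) : cands d N := [ffun k => [set sg y | y in zs k]].
have memsg : forall (A : {set 'I_d}) x, (sg x \in [set sg y | y in A]) = (x \in A).
  by move=> A x; apply/imsetP/idP => [[y yA /perm_inj ->] // | xA]; exists x.
have hj : sg j = j by rewrite /sg tpermD // eq_sym.
have hi'' : sg i = i' by rewrite /sg tpermL.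
have mj : forall A : {set 'I_d}, (j \in [set sg y | y in A]) = (j \in A).
  by move=> A; rewrite -{1}hj memsg.
have mi : forall A : {set 'I_d}, (i' \in [set sg y | y in A]) = (i \in A).
  by move=> A; rewrite -hi'' memsg.
have Phi_inj : injective Phi.
  move=> z1 z2 /ffunP H; apply/ffunP => k; have := H k; rewrite !ffunE.
  by move/(imset_inj (@perm_inj _ sg)).
have thPhi : forall zs, theta R j (Phi zs) = theta R j zs.
  move=> zs; rewrite /theta; congr (_%:R / _); apply: eq_card => k.
  by rewrite !inE ffunE mj.
rewrite /Q; congr (_ * _).
rewrite (reindex_inj Phi_inj).
apply: eq_big => [zs | zs _].
  apply: eq_forallb => k; rewrite ffunE /Zset !inE card_imset //; exact: perm_inj.
apply: eq_bigr => k _.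
by rewrite !pi_split thPhi !ffunE mj mi.
Qed.

Lemma Exhat_entry i :
  E_xhat s N eps j 0 i = (m_mmrc d s N eps)^-1 * (Q i - b_mmrc d s N eps).
Proof.
set mi := (m_mmrc d s N eps)^-1; set bb := b_mmrc d s N eps.
set c := (#|Zset d s|%:R : R) ^- N.
rewrite /E_xhat summxE.
rewrite (eq_bigr (fun zs : cands d N => mi * (c * \sum_k pi_mmrc s eps j zs k * (i \in zs k)%:R) - mi * bb * c)) => [|zs _]; last first.
  rewrite mxE summxE.
  rewrite (eq_bigr (fun k => mi * (pi_mmrc s eps j zs k * (i \in zs k)%:R) - mi * bb * pi_mmrc s eps j zs k)) => [|k _]; last first.
    by rewrite /xhat !mxE /mi /bb; ring.
  by rewrite sumrB -!mulr_sumr sum_pi /mi /bb /c; ring.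
rewrite sumrB -!mulr_sumr sum_const_ok /Q /c cardZ.
have W0 : W ^+ N != 0 by rewrite expf_neq0 // lt0r_neq0 // W_gt0.
by field.
Qed.

End Fixj.

End Proof.

Theorem lemma2 (R : realType) (d N s : nat) (eps : R) :
  (2 <= d)%N -> 0 < eps ->
  (s%:Z = Num.ceil (d%:R / (1 + expR eps)))%R ->
  (0 < N)%N ->
  @m_mmrc R d s N eps != 0 ->
  forall j : 'I_d, @E_xhat R d s N eps j = @evec R d j.
Proof.
move=> hd heps hceil hN hm j.
have ee : 1 < expR eps by rewrite expR_gt1.
have hs0 : (0 < s)%N.
  have : (0 < Num.ceil (d%:R / (1 + expR eps)))%R.
    rewrite ceil_gt0; apply: divr_gt0; last by lra.
    by rewrite ltr0n; apply: leq_trans hd.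
  by rewrite -hceil ltz_nat.
have hsd : (s < d)%N.
  have x := ceilB1_lt (d%:R / (1 + expR eps) : R).
  rewrite -hceil in x.
  have hx : ((s%:Z - 1)%:~R : R) = s%:R - 1 by rewrite intrD.
  rewrite hx in x.
  set y := d%:R / (1 + expR eps) in x.
  have hy : y * (1 + expR eps) = d%:R by rewrite /y divfK //; apply: lt0r_neq0; lra.
  have hy0 : 0 <= y by rewrite /y divr_ge0 ?ler0n //; lra.
  have d2 : (2 : R) <= d%:R by rewrite (ler_nat R 2 d).
  have : (s%:R : R) < d%:R by nra.
  by rewrite ltr_nat.
have d1 : (d%:R : R) - 1 != 0.
  have d2 : (2 : R) <= d%:R by rewrite (ler_nat R 2 d).
  by apply/eqP => ?; lra.
apply/rowP => i.
rewrite (Exhat_entry R d s N eps hs0 hsd hN heps j i) /evec mxE eqxx /=.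
case: (eqVneq i j) => [-> | ne].
  rewrite (Qj R d s N eps hs0 hsd hN heps) ?eqxx /=.
  have -> : G d s N eps - b_mmrc d s N eps = m_mmrc d s N eps.
    by rewrite /m_mmrc /b_mmrc; field.
  by rewrite mulVf.
rewrite /=.
have hs := Qsum R d s N eps hs0 hsd hN heps j.
rewrite (bigD1 j) //= (Qj R d s N eps hs0 hsd hN heps) in hs.
have hrest : \sum_(i' | i' != j) Q R d s N eps j i' = (d%:R - 1) * Q R d s N eps j i.
  rewrite (eq_bigr (fun _ => Q R d s N eps j i)) => [|i' hi']; last exact: Qsym.
  rewrite (eq_bigl (mem [set~ j])) => [|i']; last by rewrite !inE.
  have hd1 : ((d.-1)%:R : R) = d%:R - 1.
    by rewrite -{2}(prednK (ltnW hd)) -addn1 natrD addrK.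
  by rewrite sumr_const cardsC1 card_ord -hd1 mulr_natl.
rewrite hrest in hs.
have -> : Q R d s N eps j i - b_mmrc d s N eps = 0.
  rewrite /b_mmrc -hs.
  by field.
by rewrite mulr0.
Qed.
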